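(* Assume $q>2$. For every integer $k\ge1$, in $K_\infty$: $$\zeta_C(q^k)\,\zeta_C(q^k-1)=\zeta_C(2q^k-1)+\zeta_C(q^k-1,q^k).$$
   Context: $A=\mathbb{F}_q[\theta]$, $A^+$ the monic polynomials, $K_\infty=\mathbb{F}_q((1/\theta))$. $\zeta_C(n)=\sum_{a\in A^+}a^{-n}$ and $\zeta_C(n_1,n_2)=\sum_{a_1,a_2\in A^+,\ \deg a_1>\deg a_2}a_1^{-n_1}a_2^{-n_2}$, for integers $n,n_1,n_2\ge1$. *)

(* Defs.v *)
(* K_oo = F_q((1/theta)).  All quantities in the theorem lie in
   the valuation ring F_q[[1/theta]]; we model an element of F_q[[1/theta]] by
   its coefficient sequence  f : nat -> F,  f k = coefficient of theta^(-k).
   Equality in K_oo of two such elements is equality of coefficient sequences. *)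
From HB Require Import structures.
From mathcomp Require Import all_boot all_order all_algebra all_field.
Set Implicit Arguments. Unset Strict Implicit. Unset Printing Implicit Defensive.
Import GRing.Theory.
Local Open Scope ring_scope.

Section PS.
Variable F : finFieldType.

Definition ps := nat -> F.

Definition ps_one : ps := fun k => if k == 0%N then 1 else 0.
Definition ps_add (f g : ps) : ps := fun k => f k + g k.
Definition ps_mul (f g : ps) : ps :=
  fun k => \sum_(i < k.+1) f i * g (k - i)%N.
Definition ps_exp (n : nat) (f : ps) : ps := iter n (ps_mul f) ps_one.
Definition ps_shift (d : nat) (f : ps) : ps :=
  fun k => if (d <= k)%N then f (k - d)%N else 0.

(* inverse of 1 + w for a polynomial w in t with w(0) = 0:
   (1+w)^(-1) = sum_m (-w)^m; the coefficient of t^k only involves m <= k. *)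
Definition ps_inv1 (w : {poly F}) : ps :=
  fun k => (\sum_(m < k.+1) (- w) ^+ m)`_k.

(* A monic polynomial of degree d in A = F[theta] is encoded by its lower
   coefficients c : {ffun 'I_d -> F}:
     a = theta^d + sum_(i<d) c i * theta^i
       = theta^d * (1 + sum_(i<d) c i * t^(d-i)),   t = 1/theta. *)
Definition monic_tail (d : nat) (c : {ffun 'I_d -> F}) : {poly F} :=
  \sum_(i < d) c i *: 'X^(d - i).

Definition inv_monic (d : nat) (c : {ffun 'I_d -> F}) : ps :=
  ps_shift d (ps_inv1 (monic_tail c)).

Definition inv_monic_pow (d : nat) (c : {ffun 'I_d -> F}) (n : nat) : ps :=
  ps_exp n (inv_monic c).

(* zeta_C(n) = sum_{a in A+} a^(-n), summed degree by degree; for n >= 1 the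
   monic a of degree d contribute only to coefficients of index >= d*n >= d,
   so coefficient k of the (convergent) series is the finite sum over d <= k. *)
Definition zetaC (n : nat) : ps :=
  fun k => \sum_(d < k.+1) \sum_(c : {ffun 'I_d -> F}) inv_monic_pow c n k.

(* zeta_C(n1,n2) = sum_{deg a1 > deg a2} a1^(-n1) a2^(-n2); for n1 >= 1 the
   terms with deg a1 = d1 have valuation >= d1, so only d1 <= k matter. *)
Definition zetaC2 (n1 n2 : nat) : ps :=
  fun k => \sum_(d1 < k.+1) \sum_(d2 < d1)
             \sum_(c1 : {ffun 'I_d1 -> F}) \sum_(c2 : {ffun 'I_d2 -> F})
               ps_mul (inv_monic_pow c1 n1) (inv_monic_pow c2 n2) k.

End PS.

(* Main.v *)
Set Warnings "-notation-overridden,-ambiguous-paths,-deprecated".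
Require Import Defs.
From HB Require Import structures.
From mathcomp Require Import all_boot all_order all_algebra all_field all_fingroup all_solvable.
From mathcomp Require Import ring zify.
From Stdlib Require Import Setoid Morphisms FunctionalExtensionality.
Set Implicit Arguments. Unset Strict Implicit. Unset Printing Implicit Defensive.
Import GRing.Theory.
Local Open Scope ring_scope.
Section S.
Variable F : finFieldType.
Definition eqN (N : nat) (p q : {poly F}) := forall i, (i < N)%N -> p`_i = q`_i.
Lemma eqN_refl N : Reflexive (eqN N). Proof. by move=> p i. Qed.
Lemma eqN_sym N : Symmetric (eqN N). Proof. by move=> p q h i hi; rewrite (h i hi). Qed.
Lemma eqN_trans N : Transitive (eqN N). Proof. by move=> p q r h1 h2 i hi; rewrite (h1 i hi) (h2 i hi). Qed.
Add Parametric Relation N : {poly F} (eqN N)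
  reflexivity proved by (@eqN_refl N) symmetry proved by (@eqN_sym N)
  transitivity proved by (@eqN_trans N) as eqN_rel.
Add Parametric Morphism N : (@GRing.add {poly F}) with signature
  eqN N ==> eqN N ==> eqN N as eqN_add.
Proof. by move=> p p' h q q' h' i hi; rewrite !coefD (h i hi) (h' i hi). Qed.
Add Parametric Morphism N : (@GRing.opp {poly F}) with signature
  eqN N ==> eqN N as eqN_opp.
Proof. by move=> p p' h i hi; rewrite !coefN (h i hi). Qed.
Add Parametric Morphism N : (@GRing.mul {poly F}) with signature
  eqN N ==> eqN N ==> eqN N as eqN_mul.
Proof.
move=> p p' h q q' h' i hi; rewrite !coefM; apply: eq_bigr => j _.
rewrite (h j) ?(h' (i - j)%N) //; [exact: leq_ltn_trans (leq_subr _ _) hi| exact: leq_ltn_trans (ltnSE (ltn_ord j)) hi].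
Qed.
Add Parametric Morphism N : (@GRing.exp {poly F}) with signature
  eqN N ==> eq ==> eqN N as eqN_exp.
Proof. move=> p p' h n; elim: n => [|n IH]; first by []. rewrite !exprS; exact: eqN_mul_Proper. Qed.

Lemma eqN_sub0 N (p q : {poly F}) : eqN N (p - q) 0 -> eqN N p q.
Proof. by move=> h i hi; apply/eqP; rewrite -subr_eq0 -coefB (h i hi) coef0. Qed.

Lemma key_pair N (m : nat) (g : F) (s t uA uB uH A B H : {poly F}) :
  g != 0 ->
  (forall u v : {poly F}, (u - v)^+ m.+1 = u^+m.+1 - v^+m.+1) ->
  g ^+ m.+1 = g ->
  A - B = g%:P * s * H ->
  eqN N (A * uA) 1 -> eqN N (B * uB) 1 -> eqN N (H * uH) 1 ->
  eqN N ((s*t*uA)^+m.+1 * (s*t*uB)^+m)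
        ((g^-1%:P * (t*uH))^+m.+1 * ((s*t*uB)^+m - (s*t*uA)^+m) + (t*uH)^+m * (s*t*uA)^+m.+1).
Proof.
move=> g0 frob gn hAB h1 h2 h3.
set G := g^-1%:P.
have hG : G ^+ m.+1 = G.
  by rewrite /G -polyC_exp exprVn gn.
have hsH : s * H = G * (A - B).
  by rewrite hAB /G !mulrA -polyCM mulVf // polyC1 mul1r.
set Z := s^+m.+1 * uA^+m.+1 * uB^+m - G^+m.+1 * uH^+m.+1 * (uB^+m - uA^+m) - s * uH^+m * uA^+m.+1.
apply: eqN_sub0.
have -> : (s*t*uA)^+m.+1 * (s*t*uB)^+m -
   ((G * (t*uH))^+m.+1 * ((s*t*uB)^+m - (s*t*uA)^+m) + (t*uH)^+m * (s*t*uA)^+m.+1)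
   = (t^+m.+1 * t^+m * s^+m) * Z.
  rewrite /Z !exprMn !exprS; ring.
suff hZ : eqN N Z 0 by rewrite hZ mulr0; reflexivity.
have hWU : eqN N ((A*uA)^+m.+1 * (B*uB)^+m * (H*uH)^+m.+1) 1.
  by rewrite h1 h2 h3 !expr1n !mulr1; reflexivity.
have -> : Z = Z * 1 by rewrite mulr1.
rewrite -hWU.
have -> : Z * ((A*uA)^+m.+1 * (B*uB)^+m * (H*uH)^+m.+1) =
  (s^+m.+1 * H^+m.+1 * (A*uA)^+m.+1 * (B*uB)^+m
   - G^+m.+1 * (H*uH)^+m.+1 * (A^+m.+1 * (B*uB)^+m - (A*uA)^+m * A * B^+m)
   - s * H * B^+m * (H*uH)^+m * (A*uA)^+m.+1) * (uA^+m.+1 * uB^+m * uH^+m.+1).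
  rewrite /Z !exprMn !exprS; ring.
rewrite h1 h2 h3 !expr1n !mulr1.
have -> : s^+m.+1 * H^+m.+1 = G * (A^+m.+1 - B^+m.+1).
  by rewrite -exprMn hsH exprMn hG frob.
rewrite hsH hG.
have -> : G * (A ^+ m.+1 - B ^+ m.+1) - G * (A ^+ m.+1 - 1 * A * B ^+ m) -
   G * (A - B) * B ^+ m = 0.
  rewrite !exprS; ring.
by rewrite mul0r; reflexivity.
Qed.
Definition tr (N : nat) (f : ps F) : {poly F} := \poly_(i < N) f i.
Definition uu (N d : nat) (c : {ffun 'I_d -> F}) : {poly F} :=
  \sum_(m0 < N) (- monic_tail c) ^+ m0.
Definition xx (N d : nat) (c : {ffun 'I_d -> F}) : {poly F} := 'X^d * uu N c.
Definition AA (d : nat) (c : {ffun 'I_d -> F}) : {poly F} := 1 + monic_tail c.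

Lemma monic_tailX d (c : {ffun 'I_d -> F}) :
  monic_tail c = 'X * \sum_(i < d) c i *: 'X^((d - i).-1).
Proof.
rewrite /monic_tail mulr_sumr; apply: eq_bigr => i _.
by rewrite -scalerAr -exprS prednK // subn_gt0.
Qed.

Lemma coef_powtail d (c : {ffun 'I_d -> F}) m i : (i < m)%N ->
  ((- monic_tail c) ^+ m)`_i = 0.
Proof.
move=> him; rewrite monic_tailX -mulrN exprMn coefXnM.
by rewrite him.
Qed.

Lemma AAuu N d (c : {ffun 'I_d -> F}) : eqN N (AA c * uu N c) 1.
Proof.
have -> : AA c * uu N c = 1 - (- monic_tail c) ^+ N.
  by rewrite /AA /uu -[in RHS]opprB subrX1 -mulNr opprB opprK.
move=> i hi; rewrite coefB coef_powtail // subr0.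
by [].
Qed.

Lemma coef_tr N f i : (tr N f)`_i = if (i < N)%N then f i else 0.
Proof. by rewrite /tr coef_poly. Qed.

Lemma tr_mul N f g : eqN N (tr N (ps_mul f g)) (tr N f * tr N g).
Proof.
move=> i hi; rewrite coef_tr hi coefM /ps_mul; apply: eq_bigr => j _.
rewrite !coef_tr (leq_ltn_trans (leq_subr _ _) hi).
by rewrite (leq_ltn_trans (ltnSE (ltn_ord j)) hi).
Qed.

Lemma tr_one N : eqN N (tr N (ps_one F)) 1.
Proof. by move=> i hi; rewrite coef_tr hi coef1 /ps_one; case: (i == 0)%N. Qed.

Lemma tr_exp N n f : eqN N (tr N (ps_exp n f)) (tr N f ^+ n).
Proof.
elim: n => [|n IH]; first exact: tr_one.
rewrite /ps_exp iterS -/(ps_exp n f) exprS.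
by rewrite tr_mul IH; reflexivity.
Qed.

Lemma tr_inv_monic N d (c : {ffun 'I_d -> F}) : eqN N (tr N (inv_monic c)) (xx N c).
Proof.
move=> i hi; rewrite coef_tr hi /inv_monic /ps_shift /xx coefXnM.
case: (ltnP i d) => hdi; first by [].
rewrite /ps_inv1 /uu.
set j := (i - d)%N.
have hj : (j < N)%N by rewrite (leq_ltn_trans (leq_subr _ _) hi).
rewrite !coef_sum.
rewrite (big_ord_widen N (fun m0 => ((- monic_tail c) ^+ m0)`_j)) //.
rewrite [RHS](bigID (fun m0 : 'I_N => (m0 < j.+1)%N)) /= [X in _ = _ + X]big1 ?addr0 //.
by move=> m0; rewrite -leqNgt => hm; rewrite coef_powtail.
Qed.

Lemma tr_inv_monic_pow N d (c : {ffun 'I_d -> F}) n :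
  eqN N (tr N (inv_monic_pow c n)) (xx N c ^+ n).
Proof. by rewrite /inv_monic_pow tr_exp tr_inv_monic; reflexivity. Qed.

Lemma coef_xx_pow N d (c : {ffun 'I_d -> F}) n i : (0 < n)%N -> (i < d)%N ->
  (xx N c ^+ n)`_i = 0.
Proof.
move=> hn hi; rewrite /xx exprMn -exprM coefXnM.
by rewrite (leq_trans hi) // leq_pmulr.
Qed.
Definition get e (h : {ffun 'I_e -> F}) (i : nat) : F :=
  if insub i is Some j then h j else 0.

Lemma get_ord e (h : {ffun 'I_e -> F}) (j : 'I_e) : get h j = h j.
Proof. by rewrite /get valK. Qed.

Lemma get_out e (h : {ffun 'I_e -> F}) i : (e <= i)%N -> get h i = 0.
Proof. by move=> hi; rewrite /get insubF // ltnNge hi. Qed.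

Definition emb d e (g : F) (h : {ffun 'I_e -> F}) : {ffun 'I_d -> F} :=
  [ffun i : 'I_d => if (i < e)%N then g * get h i
                    else if (nat_of_ord i == e) then g else 0].

Definition topn d (dl : {ffun 'I_d -> F}) : nat :=
  \max_(i < d | dl i != 0) (nat_of_ord i).

Lemma topn_ge d (dl : {ffun 'I_d -> F}) (i : 'I_d) : dl i != 0 -> (i <= topn dl)%N.
Proof. by move=> h; apply: (leq_bigmax_cond i). Qed.

Lemma topn_nz d (dl : {ffun 'I_d -> F}) : dl != 0 -> exists2 i : 'I_d, dl i != 0 & topn dl = i.
Proof.
move=> hdl.
case: (pickP (fun i => dl i != 0)) => [i0 hi0|h0]; last first.
  case/eqP: hdl; apply/ffunP => i; rewrite ffunE.
  by move: (h0 i) => /= /negbFE /eqP.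
have [i1 h1 e1] := @eq_bigmax_cond _ [pred i | dl i != 0] (fun i : 'I_d => nat_of_ord i)
    (ltac:(by apply/card_gt0P; exists i0)).
by exists i1.
Qed.

Lemma topn_le d (dl : {ffun 'I_d -> F}) m : (forall i : 'I_d, dl i != 0 -> (i <= m)%N) ->
  (topn dl <= m)%N.
Proof. by move=> h; apply/bigmax_leqP => i; apply: h. Qed.

Lemma emb0 d e (h : {ffun 'I_e -> F}) : emb d 0 h = 0.
Proof. apply/ffunP => i; rewrite /emb !ffunE mul0r; by case: ifP => // _; case: ifP. Qed.

Lemma emb_at d e g (h : {ffun 'I_e -> F}) (i : 'I_d) : nat_of_ord i = e -> emb d g h i = g.
Proof. by move=> hi; rewrite ffunE hi ltnn eqxx. Qed.

Lemma emb_nz d e g (h : {ffun 'I_e -> F}) (i : 'I_d) : emb d g h i != 0 -> (i <= e)%N.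
Proof.
rewrite ffunE; case: ltnP => [/ltnW //|hei].
case: (eqVneq (nat_of_ord i) e) => [->//|ne]; by rewrite eqxx.
Qed.

Lemma sum_nz d (G : {ffun 'I_d -> F} -> {poly F}) :
  \sum_(dl : {ffun 'I_d -> F} | dl != 0) G dl =
  \sum_(e < d) \sum_(g : F | g != 0) \sum_(h : {ffun 'I_e -> F}) G (emb d g h).
Proof.
case: d G => [|d] G.
  rewrite big_ord0 big1 // => dl; case/eqP; apply/ffunP => -[] //.
rewrite (partition_big (fun dl => (inord (topn dl) : 'I_d.+1)) xpredT) //.
apply: eq_bigr => e _; rewrite pair_big /=.
have lee : (e <= d.+1)%N by apply: ltnW.
rewrite (reindex_onto (fun p : F * {ffun 'I_e -> F} => emb d.+1 p.1 p.2)
   (fun dl => (dl e, [ffun j : 'I_e => dl (widen_ord lee j) / dl e]))) /=.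
  apply: eq_bigl => -[g h] /=; rewrite andbT.
  case: (eqVneq g 0) => [->|gn0]; first by rewrite emb0 eqxx.
  have nz : emb d.+1 g h != 0.
    apply/eqP => /ffunP /(_ e); rewrite (emb_at _ _ (erefl _)) ffunE.
    by move/eqP; rewrite (negbTE gn0).
  have tp : topn (emb d.+1 g h) = e.
    apply/eqP; rewrite eqn_leq; apply/andP; split.
      by apply: topn_le => i; apply: emb_nz.
    by apply: topn_ge; rewrite (emb_at _ _ (erefl _)).
  rewrite nz tp inord_val eqxx /=.
  rewrite (emb_at _ _ (erefl _)); apply/eqP; congr pair.
  apply/ffunP => j; rewrite !ffunE /= ltn_ord get_ord.
  by rewrite mulrAC divff // mul1r.
move=> dl /andP [hdl /eqP ht].
have [i1 hi1 ei1] := topn_nz hdl.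
have he : nat_of_ord e = topn dl.
  by rewrite -ht inordK // ei1 ltn_ord.
have hde : dl e != 0.
  by have -> : e = i1 by apply: val_inj; rewrite /= he ei1.
apply/ffunP => i; rewrite ffunE.
case: (ltnP i e) => hie.
  have -> : get [ffun j : 'I_e => dl (widen_ord lee j) / dl e] i = dl i / dl e.
    by rewrite -[i : nat]/(nat_of_ord (Ordinal hie)) get_ord ffunE; congr (dl _ / _); apply: val_inj.
  by rewrite /= mulrC divfK.
case: eqP => hie2.
  by congr (dl _); apply: val_inj.
case: (eqVneq (dl i) 0) => // hi.
have := topn_ge hi; rewrite -he => hle.
by case: hie2; apply/eqP; rewrite eqn_leq hle hie.
Qed.
Lemma monic_tailB d (c c' : {ffun 'I_d -> F}) :
  monic_tail (c - c') = monic_tail c - monic_tail c'.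
Proof.
by rewrite /monic_tail -sumrB; apply: eq_bigr => i _; rewrite !ffunE scalerBl.
Qed.

Lemma monic_tail_emb d e g (h : {ffun 'I_e -> F}) : (e < d)%N ->
  monic_tail (emb d g h) = g%:P * 'X^(d - e) * AA h.
Proof.
move=> he.
pose E (i : nat) := if (i < e)%N then g * get h i else if i == e then g else 0.
rewrite /monic_tail (eq_bigr (fun i : 'I_d => E i *: 'X^(d - i))); last first.
  by move=> i _; rewrite ffunE.
rewrite -(big_mkord xpredT (fun i => E i *: 'X^(d - i))).
rewrite (@big_cat_nat _ _ _ e) //=; last exact: ltnW he.
rewrite [X in _ + X]big_ltn //.
rewrite [X in _ + (_ + X)]big1_seq ?addr0; last first.
  move=> i /andP [_]; rewrite mem_index_iota => /andP [hi _].
  rewrite /E ltnNge (ltnW hi) /= gtn_eqF //.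
  by rewrite scale0r.
rewrite /E ltnn eqxx big_mkord /AA mulrDr mulr1 mulr_sumr addrC.
congr (_ + _); first by rewrite mul_polyC.
apply: eq_bigr => i _.
rewrite ltn_ord get_ord -scalerAr -mulrA -exprD mul_polyC scalerA [h i * g]mulrC.
by have -> : (d - e + (e - i) = d - i)%N by have := ltn_ord i; lia.
Qed.
Lemma eqN_sum N (I : finType) (P : pred I) (f g : I -> {poly F}) :
  (forall i, P i -> eqN N (f i) (g i)) ->
  eqN N (\sum_(i | P i) f i) (\sum_(i | P i) g i).
Proof. by move=> h j hj; rewrite !coef_sum; apply: eq_bigr => i hi; apply: h. Qed.

Definition SS (N d s : nat) : {poly F} := \sum_(c : {ffun 'I_d -> F}) xx N c ^+ s.

Lemma sum_nz_const (K : {poly F}) : (#|F|%:R : {poly F}) = 0 ->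
  \sum_(g : F | g != 0) K = - K.
Proof.
move=> hF.
rewrite (sumr_const (predC1 (0 : F))) cardC1.
apply/eqP; rewrite -addr_eq0 addrC -mulrS prednK ?card_gt0 //; last by apply/card_gt0P; exists 0.
by rewrite -mulr_natr hF mulr0.
Qed.

Lemma AA_emb d e g (h : {ffun 'I_e -> F}) (c : {ffun 'I_d -> F}) : (e < d)%N ->
  AA c - AA (c - emb d g h) = g%:P * 'X^(d - e) * AA h.
Proof.
move=> he; rewrite /AA monic_tailB (monic_tail_emb _ _ he).
rewrite /AA; set P := _ * 'X^(d - e); set M := monic_tail c; set M2 := monic_tail h; ring.
Qed.

Lemma per_degree N d m :
  (forall u v : {poly F}, (u - v)^+m.+1 = u^+m.+1 - v^+m.+1) ->
  (forall g : F, g ^+ m.+1 = g) ->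
  (#|F|%:R : {poly F}) = 0 ->
  eqN N (SS N d m.+1 * SS N d m + SS N d m.+1 * \sum_(e < d) SS N e m)
        (SS N d (m.+1 + m)).
Proof.
move=> frob gn hF.
pose G (c dl : {ffun 'I_d -> F}) := xx N c ^+ m.+1 * xx N (c - dl) ^+ m.
have hA : SS N d m.+1 * SS N d m =
   SS N d (m.+1 + m) + \sum_(c : {ffun 'I_d -> F}) \sum_(dl : {ffun 'I_d -> F} | dl != 0) G c dl.
  rewrite /SS mulr_suml -big_split /=; apply: eq_bigr => c _.
  rewrite mulr_sumr (reindex_inj (subrI c)) /= (bigD1 (0 : {ffun 'I_d -> F})) //= subr0 exprD.
  by [].  
rewrite hA (exchange_big) /= sum_nz.
have hC : forall (e : 'I_d) (g : F) (h : {ffun 'I_e -> F}), g != 0 ->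
    eqN N (\sum_(c : {ffun 'I_d -> F}) G c (emb d g h)) (xx N h ^+ m * SS N d m.+1).
  move=> e g h gn0.
  set dl := emb d g h.
  have hX : ('X^d : {poly F}) = 'X^(d - e) * 'X^e by rewrite -exprD subnK // ltnW.
  pose Y := (g^-1%:P * xx N h).
  have hk : forall c : {ffun 'I_d -> F},
      eqN N (G c dl) (Y ^+ m.+1 * (xx N (c - dl) ^+ m - xx N c ^+ m) + xx N h ^+ m * xx N c ^+ m.+1).
    move=> c; rewrite /G /Y /xx hX.
    apply: (@key_pair N m g _ _ _ _ _ (AA c) (AA (c - dl)) (AA h)) => //.
    - by rewrite /dl AA_emb.
    - exact: AAuu.
    - exact: AAuu.
    - exact: AAuu.
  transitivity (\sum_(c : {ffun 'I_d -> F}) (Y ^+ m.+1 * (xx N (c - dl) ^+ m - xx N c ^+ m) + xx N h ^+ m * xx N c ^+ m.+1)).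
    by apply: eqN_sum => c _; apply: hk.
  rewrite big_split /= -mulr_sumr sumrB (reindex_inj (addIr dl)) /=.
  under eq_bigr do rewrite addrK.
  rewrite subrr mulr0 add0r.
  by rewrite /SS mulr_sumr; reflexivity.
transitivity (SS N d (m.+1 + m) +
  \sum_(e < d) \sum_(g : F | g != 0) \sum_(h : {ffun 'I_e -> F}) (xx N h ^+ m * SS N d m.+1)
  + SS N d m.+1 * \sum_(e < d) SS N e m).
  apply: eqN_add_Proper; last reflexivity.
  apply: eqN_add_Proper; first reflexivity.
  apply: eqN_sum => e _; apply: eqN_sum => g gn0; apply: eqN_sum => h _.
  exact: hC.
have -> : \sum_(e < d) \sum_(g : F | g != 0) \sum_(h : {ffun 'I_e -> F}) (xx N h ^+ m * SS N d m.+1)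
   = - (SS N d m.+1 * \sum_(e < d) SS N e m).
  rewrite mulr_sumr -sumrN; apply: eq_bigr => e _.
  by rewrite sum_nz_const // /SS -mulr_suml mulrC.
by rewrite subrK; reflexivity.
Qed.
Lemma coef_pow_xx N d (c : {ffun 'I_d -> F}) s i : (i < N)%N ->
  inv_monic_pow c s i = (xx N c ^+ s)`_i.
Proof. by move=> hi; rewrite -(tr_inv_monic_pow c s hi) coef_tr hi. Qed.

Lemma ps_mul_coef N f g i : (i < N)%N -> ps_mul f g i = (tr N f * tr N g)`_i.
Proof. by move=> hi; rewrite -(tr_mul f g hi) coef_tr hi. Qed.

Lemma zetaC_coef N s i : (i < N)%N -> (0 < s)%N ->
  zetaC F s i = (\sum_(d < N) SS N d s)`_i.
Proof.
move=> hi hs; rewrite /zetaC coef_sum.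
rewrite (big_ord_widen N (fun d => \sum_(c : {ffun 'I_d -> F}) inv_monic_pow c s i)) //.
rewrite [RHS](bigID (fun d : 'I_N => (d < i.+1)%N)) /= [X in _ = _ + X]big1 ?addr0.
  apply: eq_bigr => d _; rewrite /SS coef_sum; apply: eq_bigr => c _.
  exact: coef_pow_xx.
move=> d; rewrite -leqNgt => hd; rewrite /SS coef_sum big1 // => c _.
by rewrite coef_xx_pow.
Qed.

Lemma tr_zeta N s : (0 < s)%N -> eqN N (tr N (zetaC F s)) (\sum_(d < N) SS N d s).
Proof. by move=> hs i hi; rewrite coef_tr hi (zetaC_coef hi hs). Qed.

Lemma zetaC2_coef a b j :
  zetaC2 F a b j = (\sum_(d1 < j.+1) \sum_(d2 < d1) SS j.+1 d1 a * SS j.+1 d2 b)`_j.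
Proof.
rewrite /zetaC2 coef_sum; apply: eq_bigr => d1 _.
rewrite coef_sum; apply: eq_bigr => d2 _.
rewrite /SS mulr_suml coef_sum; apply: eq_bigr => c1 _.
rewrite mulr_sumr coef_sum; apply: eq_bigr => c2 _.
rewrite (ps_mul_coef _ _ (ltnSn j)).
apply: (eqN_mul_Proper (tr_inv_monic_pow c1 a) (tr_inv_monic_pow c2 b)).
exact: ltnSn.
Qed.

Lemma square (f : nat -> nat -> {poly F}) N :
  \sum_(d < N) \sum_(e < N) f d e =
  \sum_(d < N) f d d + \sum_(d < N) \sum_(e < d) f d e + \sum_(d < N) \sum_(e < d) f e d.
Proof.
elim: N => [|N IH]; first by rewrite !big_ord0 !addr0.
under eq_bigr do rewrite big_ord_recr /=.
rewrite big_split /= big_ord_recr /= IH.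
rewrite [\sum_(i < N.+1) f i N]big_ord_recr /=.
rewrite [\sum_(d < N.+1) f d d]big_ord_recr /=.
rewrite [\sum_(d < N.+1) \sum_(e < d) f d e]big_ord_recr /=.
rewrite [\sum_(d < N.+1) \sum_(e < d) f e d]big_ord_recr /=.
set A1 := \sum_(d < N) f d d.
set A2 := \sum_(d < N) \sum_(e < d) f d e.
set A3 := \sum_(d < N) \sum_(e < d) f e d.
set B1 := \sum_(i < N) f N i.
set B2 := \sum_(i < N) f i N.
ring.
Qed.
Lemma main_coef m j : (0 < m)%N ->
  (forall u v : {poly F}, (u - v)^+m.+1 = u^+m.+1 - v^+m.+1) ->
  (forall g : F, g ^+ m.+1 = g) ->
  (#|F|%:R : {poly F}) = 0 ->
  ps_mul (zetaC F m.+1) (zetaC F m) j =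
  zetaC F (m.+1 + m) j + zetaC2 F m m.+1 j.
Proof.
move=> hm frob gn hF.
have hj := ltnSn j.
rewrite (ps_mul_coef _ _ hj).
rewrite (eqN_mul_Proper (@tr_zeta j.+1 _ (ltn0Sn m)) (@tr_zeta j.+1 _ hm) hj).
rewrite (zetaC_coef hj (addn_gt0 _ _ : (0 < m.+1 + m)%N)) ?ltn0Sn // zetaC2_coef -coefD.
refine ((_ : eqN j.+1 _ _) j hj).
rewrite mulr_suml; under eq_bigr do rewrite mulr_sumr.
rewrite (square (fun d e => SS j.+1 d m.+1 * SS j.+1 e m)).
apply: eqN_add_Proper; last first.
  have -> : \sum_(d < j.+1) \sum_(e < d) SS j.+1 e m.+1 * SS j.+1 d m =
            \sum_(d1 < j.+1) \sum_(d2 < d1) SS j.+1 d1 m * SS j.+1 d2 m.+1.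
    by apply: eq_bigr => d _; apply: eq_bigr => e _; rewrite mulrC.
  reflexivity.
rewrite -big_split /=; apply: eqN_sum => d _.
rewrite -mulr_sumr; exact: per_degree.
Qed.
End S.

Lemma char_nat (F : finFieldType) : exists2 p, p \in [pchar F] & exists r, #|F| = (p ^ r)%N.
Proof.
have [p pr_p ab] := is_abelemP (finField_is_abelem F).
have /p_natP [r hr] := abelem_pgroup ab.
rewrite cardsT in hr.
exists p; last by exists r.
by apply: (card_finPcharP hr).
Qed.

Lemma frob_poly (F : finFieldType) k (u v : {poly F}) :
  (u - v) ^+ (#|F| ^ k)%N = u ^+ (#|F| ^ k)%N - v ^+ (#|F| ^ k)%N.
Proof.
have [p pc [r hr]] := char_nat F.
have pr := pcharf_prime pc.
have hn : [pchar {poly F}].-nat (#|F| ^ k)%N.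
  rewrite (eq_pnat _ (pchar_poly F)) hr pnatX pnatX pnatE // pc //.
by rewrite exprDn_pchar // exprNn_pchar.
Qed.

Lemma gpow (F : finFieldType) k (g : F) : g ^+ (#|F| ^ k)%N = g.
Proof. by elim: k => [|k IH]; rewrite ?expr1 // expnS exprM expf_card IH. Qed.

Lemma cardF0 (F : finFieldType) : (#|F|%:R : {poly F}) = 0.
Proof.
have [p pc [r hr]] := char_nat F.
have pc' : p \in [pchar {poly F}] by rewrite pchar_poly.
have r0 : (0 < r)%N.
  case: r hr => // hr; have := finNzRing_gt1 F; by rewrite hr.
by rewrite hr natrX (pcharf0 pc') expr0n eqn0Ngt r0.
Qed.

Local Close Scope ring_scope.

Theorem mainTheorem7 (F : finFieldType) (q : nat) (hq : #|F| = q) (hq2 : 2 < q)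
  (k : nat) (hk : 1 <= k) :
  ps_mul (zetaC F (q ^ k)) (zetaC F (q ^ k - 1)) =
  ps_add (zetaC F (2 * q ^ k - 1)) (zetaC2 F (q ^ k - 1) (q ^ k)).
Proof.
have hn : (1 < q ^ k)%N.
  by rewrite -{1}(expn0 q) ltn_exp2l // (ltn_trans _ hq2).
set m := (q ^ k - 1)%N.
have hqm : q ^ k = m.+1 by rewrite /m subn1 prednK // ltnW.
have h2 : (2 * q ^ k - 1 = m.+1 + m)%N by rewrite hqm; lia.
rewrite h2 hqm.
apply: functional_extensionality => j.
rewrite /ps_add.
apply: main_coef.
- by rewrite /m subn_gt0.
- by move=> u v; rewrite -hqm -hq frob_poly.
- by move=> g; rewrite -hqm -hq gpow.
- exact: cardF0.
Qed.
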